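(* Let $\mathcal{M}\subseteq \mathcal{L}_n^+$ be a linear Markov model. Then $\mathcal{M}=\operatorname{span}_{\mathbb{R}}(\mathcal{M})\cap \mathcal{L}_n^+$, and the following are equivalent: (1) $\mathcal{M}$ is uniformization stable; (2) $\operatorname{span}_{\mathbb{R}}(\mathcal{M})$ is a Jordan algebra, i.e. $AB+BA\in \operatorname{span}_{\mathbb{R}}(\mathcal{M})$ for all $A,B\in \operatorname{span}_{\mathbb{R}}(\mathcal{M})$.
   Context: Let $n\ge 1$, let $\mathbf{1}\in\mathbb{R}^n$ be the all-ones column vector and $I_n$ the identity matrix. Let $\mathcal{L}_n=\{Q\in \mathrm{Mat}_n(\mathbb{R}): Q\mathbf{1}=0\}$ be the zero row sum matrices. A rate matrix is a $Q\in\mathcal{L}_n$ whose off-diagonal entries are all nonnegative; $\mathcal{L}_n^+$ denotes the set of rate matrices. A Markov model is any subset $\mathcal{M}\subseteq\mathcal{L}_n^+$; it is linear if $\mathcal{M}=\mathcal{L}\cap\mathcal{L}_n^+$ for some linear subspace $\mathcal{L}\subseteq\mathcal{L}_n$. A Markov model $\mathcal{M}$ is uniformization stable if for every $Q\in\mathcal{M}$ and every $t\ge 0$ there exists $\hat Q\in\mathcal{M}$ with $e^{Qt}-I_n=\hat Q$. A linear subspace of $\mathrm{Mat}_n(\mathbb{R})$ is a (matrix) Jordan algebra if it is closed under the product $A\odot B:=AB+BA$. *)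

(* Defs.v *)
From HB Require Import structures.
From mathcomp Require Import all_boot all_order all_algebra.
From mathcomp Require Import all_classical all_reals all_analysis.
Set Implicit Arguments. Unset Strict Implicit. Unset Printing Implicit Defensive.
Import Order.TTheory GRing.Theory Num.Theory.
Local Open Scope classical_set_scope.
Local Open Scope ring_scope.

Section Defs.
Variables (R : realType) (n : nat).

Definition ones : 'cV[R]_n := const_mx 1.

Definition zero_row_sum : set 'M[R]_n := [set Q | Q *m ones = 0].

Definition rate_matrices : set 'M[R]_n :=
  [set Q | Q *m ones = 0 /\ forall i j : 'I_n, i != j -> 0 <= Q i j].

Definition is_subspace (L : set 'M[R]_n) : Prop :=
  L 0 /\ (forall A B, L A -> L B -> L (A + B)) /\
  (forall (c : R) A, L A -> L (c *: A)).

Definition mspan (S : set 'M[R]_n) : set 'M[R]_n :=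
  [set A | exists (k : nat) (c : 'I_k -> R) (B : 'I_k -> 'M[R]_n),
      (forall i, S (B i)) /\ A = \sum_(i < k) c i *: B i].

Definition expmx (A : 'M[R]_n) : 'M[R]_n :=
  \matrix_(i, j) lim ((fun k : nat =>
      (\sum_(l < k) (l`!%:R)^-1 *: A ^+ l) i j : R^o) @ \oo).

Definition unif_stable (M : set 'M[R]_n) : Prop :=
  forall Q, M Q -> forall t : R, 0 <= t ->
    exists Qh, M Qh /\ expmx (t *: Q) - 1%:M = Qh.

Definition jordan_closed (L : set 'M[R]_n) : Prop :=
  forall A B, L A -> L B -> L (A *m B + B *m A).

End Defs.

(* Main.v *)
Require Import Defs.
From HB Require Import structures.
From mathcomp Require Import all_boot all_order all_algebra.
From mathcomp Require Import all_classical all_reals all_analysis.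
From mathcomp Require Import zify ring lra.
Import Order.TTheory GRing.Theory Num.Theory.
Import numFieldNormedType.Exports.
Set Implicit Arguments. Unset Strict Implicit. Unset Printing Implicit Defensive.
Local Open Scope classical_set_scope.
Local Open Scope ring_scope.
Lemma subsp_sum (R : realType) n (V : set 'M[R]_n) (I : finType) (F : I -> 'M[R]_n) :
  is_subspace V -> (forall i, V (F i)) -> V (\sum_i F i).
Proof.
move=> [V0 [VD VZ]] HF; elim/big_ind: _ => //.
Qed.

Lemma subsp_sub (R : realType) n (V : set 'M[R]_n) A B :
  is_subspace V -> V A -> V B -> V (A - B).
Proof.
move=> [V0 [VD VZ]] HA HB; apply: VD => //.
by rewrite -scaleN1r; apply: VZ.
Qed.

Lemma mspan_in (R : realType) n (S : set 'M[R]_n) x : S x -> mspan S x.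
Proof.
move=> Sx; exists 1%N, (fun _ => 1), (fun _ => x); split => //.
by rewrite big_ord1 scale1r.
Qed.

Lemma mspan_sub (R : realType) n (S V : set 'M[R]_n) :
  is_subspace V -> S `<=` V -> mspan S `<=` V.
Proof.
move=> hV SV A [k [c [B [HB ->]]]].
apply: subsp_sum => // i; case: hV => _ [_ VZ]; apply: VZ; exact: SV.
Qed.

Lemma mspan_subspace (R : realType) n (S : set 'M[R]_n) : is_subspace (mspan S).
Proof.
split; first by exists 0%N, (fun _ => 0), (fun _ => 0); split; [by case|by rewrite big_ord0].
split.
  move=> A B [k1 [c1 [B1 [H1 ->]]]] [k2 [c2 [B2 [H2 ->]]]].
  exists (k1 + k2)%N, (fun i => match fintype.split i with inl a => c1 a | inr b => c2 b end),
    (fun i => match fintype.split i with inl a => B1 a | inr b => B2 b end).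
  split; first by move=> i; case: (fintype.split i).
  rewrite big_split_ord /=; congr (_ + _); apply: eq_bigr => i _.
    by rewrite -[lshift _ _]/(unsplit (inl _)) unsplitK.
  by rewrite -[rshift _ _]/(unsplit (inr _)) unsplitK.
move=> a A [k [c [B [HB ->]]]].
exists k, (fun i => a * c i), B; split => //.
by rewrite scaler_sumr; apply: eq_bigr => i _; rewrite scalerA.
Qed.

Lemma vspace_of (R : realType) n (V : set 'M[R]_n) :
  is_subspace V -> exists W : {vspace 'M[R]_n}, forall x, V x <-> x \in W.
Proof.
move=> hV.
suff H : forall k (W : {vspace 'M[R]_n}), (forall x, x \in W -> V x) ->
  (\dim (fullv : {vspace 'M[R]_n}) - \dim W <= k)%N ->
  exists W : {vspace 'M[R]_n}, forall x, V x <-> x \in W.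
  apply: (H (\dim (fullv : {vspace 'M[R]_n})) 0%VS); last exact: leq_subr.
  by move=> x; rewrite memv0 => /eqP ->; case: hV.
elim => [|k IH] W HW Hk.
all: case: (pselect (exists x, V x /\ x \notin W)) => [[x [Vx xW]]|nex]; last first.
  1,3: exists W => x; split => [Vx|]; last exact: HW.
  1,2: by apply: contrapT => xW; apply: nex; exists x; split => //; apply/negP.
all: pose W' := (W + <[x]>)%VS.
all: have HW' : forall y, y \in W' -> V y.
  1,3: move=> y /memv_addP [u uW [v /vlineP [a ->] ->]].
  1,2: case: hV => _ [VD VZ]; apply: VD; [exact: HW| exact: VZ].
all: have lt1 : (\dim W < \dim W')%N.
  1,3: rewrite (ltn_leqif (dimv_leqif_sup (addvSl W <[x]>%VS))).
  1,2: apply/negP => /subvP/(_ x) H; move/negP: xW; apply; apply: H.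
  1,2: by have := memv_add (mem0v W) (memv_line x); rewrite add0r.
all: have lt2 : (\dim W' <= \dim (fullv : {vspace 'M[R]_n}))%N by apply: dimvS; apply: subvf.
  by exfalso; move: Hk lt1 lt2; clear; lia.
apply: (IH W') => //; move: Hk lt1 lt2; clear; lia.
Qed.

Lemma cvg_sumR (R : realType) (I : finType) (f : I -> nat -> R) (a : I -> R) :
  (forall i, f i @ \oo --> a i) -> (fun m => \sum_i f i m) @ \oo --> \sum_i a i.
Proof. move=> H; apply: (cvg_big add_continuous) => //. Qed.

Lemma proj_entry (R : realType) n (W : {vspace 'M[R]_n}) (Y : 'M[R]_n) i j :
  projv W Y i j = \sum_k \sum_l Y k l * projv W (delta_mx k l) i j.
Proof.
rewrite {1}(matrix_sum_delta Y) linear_sum summxE; apply: eq_bigr => k _.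
rewrite linear_sum summxE; apply: eq_bigr => l _.
by rewrite linearZ mxE.
Qed.

Lemma span_closed (R : realType) n (V : set 'M[R]_n) (u : nat -> 'M[R]_n) (X : 'M[R]_n) :
  is_subspace V -> (forall m, V (u m)) ->
  (forall i j, (fun m => u m i j) @ \oo --> X i j) -> V X.
Proof.
move=> hV Vu cu; have [W HW] := vspace_of hV.
suff <- : projv W X = X by apply/HW; apply: memv_proj.
apply/matrixP => i j.
have c1 : (fun m => u m i j) @ \oo --> projv W X i j.
  have -> : (fun m => u m i j) =
      (fun m => \sum_k \sum_l u m k l * projv W (delta_mx k l) i j).
    by apply/funext => m; rewrite -proj_entry projv_id //; apply/HW.
  rewrite proj_entry; apply: cvg_sumR => k; apply: cvg_sumR => l.
  exact: cvgMr_tmp.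
have hR := @Rhausdorff R.
rewrite -(cvg_lim hR c1); exact: (cvg_lim hR (cu i j)).
Qed.

Definition psum (R : realType) n (A : 'M[R]_n) (N : nat) : 'M[R]_n :=
  \sum_(l < N) (l`!%:R)^-1 *: A ^+ l.

Definition mnorm (R : realType) n (A : 'M[R]_n) : R := \sum_k \sum_l `|A k l|.

Lemma mnorm_ge0 (R : realType) n (A : 'M[R]_n) : 0 <= mnorm A.
Proof. by apply: sumr_ge0 => k _; apply: sumr_ge0. Qed.

Lemma entry_le (R : realType) n (A : 'M[R]_n) i j : `|A i j| <= mnorm A.
Proof.
rewrite /mnorm (bigD1 i) //= (bigD1 j) //= -addrA lerDl.
apply: addr_ge0; first by apply: sumr_ge0.
by apply: sumr_ge0 => k _; apply: sumr_ge0.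
Qed.

Lemma pow_bound (R : realType) n (A : 'M[R]_n) l i j :
  `|(A ^+ l) i j| <= (n%:R * mnorm A) ^+ l.
Proof.
elim: l i j => [|l IH] i j.
  by rewrite expr0 !mxE; case: (i == j); rewrite ?normr1 ?normr0.
rewrite exprSr -mulmxE mxE.
apply: (le_trans (ler_norm_sum _ _ _)).
apply: (@le_trans _ _ (\sum_(k < n) (n%:R * mnorm A) ^+ l * mnorm A)).
  apply: ler_sum => k _; rewrite normrM; apply: ler_pM => //.
  exact: entry_le.
rewrite sumr_const card_ord.
suff -> : ((n%:R * mnorm A) ^+ l * mnorm A) *+ n = (n%:R * mnorm A) ^+ l.+1 by [].
by rewrite -mulr_natr exprSr; ring.
Qed.

Lemma psum_entry (R : realType) n (A : 'M[R]_n) N i j :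
  psum A N i j = series (fun l => (l`!%:R)^-1 * (A ^+ l) i j) N.
Proof.
rewrite /psum /series /= summxE big_mkord; apply: eq_bigr => l _.
by rewrite mxE.
Qed.

Lemma psum_cvgn (R : realType) n (A : 'M[R]_n) i j : cvgn (fun N => psum A N i j).
Proof.
have -> : (fun N => psum A N i j) = series (fun l => (l`!%:R)^-1 * (A ^+ l) i j).
  by apply/funext => N; rewrite psum_entry.
apply: normed_cvg.
apply: (@series_le_cvg _ _ (exp_coeff (n%:R * mnorm A))).
- by move=> k; rewrite /= normr_ge0.
- by move=> k; apply: exp_coeff_ge0; apply: mulr_ge0 => //; apply: mnorm_ge0.
- move=> k /=; rewrite normrM ger0_norm ?invr_ge0 // mulrC.
  by apply: ler_wpM2r; [rewrite invr_ge0|apply: pow_bound].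
- exact: is_cvg_series_exp_coeff.
Qed.

Lemma expmx_cvg (R : realType) n (A : 'M[R]_n) i j :
  (fun N => psum A N i j) @ \oo --> expmx A i j.
Proof.
rewrite /expmx mxE.
have := @psum_cvgn R n A i j.
by rewrite /psum.
Qed.

Lemma scalar_exp (R : realType) n (x : R) k : (x%:M : 'M[R]_n) ^+ k = (x ^+ k)%:M.
Proof.
elim: k => [|k IH]; first by rewrite !expr0.
by rewrite !exprS IH -mulmxE -scalar_mxM.
Qed.

Lemma fact_neq0 (R : realType) k : (k`!%:R : R) != 0.
Proof. by rewrite pnatr_eq0 -lt0n fact_gt0. Qed.

Lemma exp_term_split (R : realType) n (P : 'M[R]_n) (c : R) l :
  (l`!%:R)^-1 *: (P + (-c)%:M) ^+ l =
  \sum_(i < l.+1) ((-c) ^+ i / i`!%:R) *: (((l - i)`!%:R)^-1 *: P ^+ (l - i)).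
Proof.
rewrite exprDn_comm; last by rewrite /GRing.comm -mulmxE scalar_mxC.
rewrite scaler_sumr; apply: eq_bigr => i _.
rewrite scalar_exp -mulmxE mul_mx_scalar scalerMnl !scalerA -mulr_natr.
congr (_ *: _).
have hi : (i <= l)%N by rewrite -ltnS.
have hf : (l`!%:R : R) = ('C(l,i))%:R * (i`!)%:R * ((l-i)`!)%:R.
  by rewrite -!natrM -mulnA bin_fact.
have hC : ('C(l,i)%:R : R) != 0 by rewrite pnatr_eq0 -lt0n bin_gt0.
have h1 := fact_neq0 R i; have h2 := fact_neq0 R (l - i).
rewrite hf; field.
by rewrite hC h1 h2.
Qed.

Lemma psum_split (R : realType) n (P : 'M[R]_n) (c : R) N :
  psum (P + (-c)%:M) N =
  \sum_(j < N) series (exp_coeff (-c)) (N - j)%N *: ((j`!%:R)^-1 *: P ^+ j).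
Proof.
elim: N => [|N IH]; first by rewrite /psum !big_ord0.
rewrite /psum big_ord_recr /= -/(psum _ N) IH exp_term_split.
rewrite [in RHS]big_ord_recr /= subSnn.
rewrite [\sum_(i < N.+1) _](reindex_inj rev_ord_inj) /= big_ord_recr /=.
rewrite subnn subn0.
have -> : series (exp_coeff (-c)) 1 = (-c) ^+ 0 / 0`!%:R.
  by rewrite seriesSr /series /= big_geq // add0r.
rewrite addrA; congr (_ + _).
rewrite -big_split /=; apply: eq_bigr => j _.
rewrite subSS subKn; last exact: ltnW (ltn_ord j).
rewrite subSn; last exact: ltnW (ltn_ord j).
by rewrite seriesSr scalerDl.
Qed.

Lemma cvg_ge0 (R : realType) (u : nat -> R) l :
  (forall N, 0 <= u N) -> u @ \oo --> l -> 0 <= l.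
Proof.
move=> H cu; rewrite -(cvg_lim (@Rhausdorff R) cu).
apply: limr_ge; first exact: (cvgP _ cu).
exact: nearW.
Qed.

Lemma expc_le (R : realType) (x : R) k : 0 <= x -> series (exp_coeff x) k <= expR x.
Proof.
move=> x0; apply: nondecreasing_cvgn_le; last exact: is_cvg_series_exp_coeff.
apply/nondecreasing_seqP => m; rewrite seriesSr lerDl.
exact: exp_coeff_ge0.
Qed.

Lemma s_bound (R : realType) (c : R) k : 0 <= c ->
  `|series (exp_coeff (-c)) k| <= expR c.
Proof.
move=> c0; apply: le_trans (expc_le k c0).
rewrite /series /=; apply: le_trans (ler_norm_sum _ _ _) _.
apply: ler_sum => i _; rewrite /exp_coeff /=.
by rewrite normrM normfV normrX normrN !ger0_norm.
Qed.

Lemma mx_pow_ge0 (R : realType) n (P : 'M[R]_n) :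
  (forall i j, 0 <= P i j) -> forall l i j, 0 <= (P ^+ l) i j.
Proof.
move=> HP; elim => [|l IH] i j.
  by rewrite expr0 mxE; case: (i == j).
rewrite exprSr -mulmxE mxE; apply: sumr_ge0 => k _; exact: mulr_ge0.
Qed.

Lemma expmx_ge0_aux (R : realType) n (P : 'M[R]_n) (c : R) :
  0 <= c -> (forall i j, 0 <= P i j) -> forall i k, 0 <= expmx (P + (-c)%:M) i k.
Proof.
move=> c0 HP i k.
pose s := series (exp_coeff (-c)).
have cs : s @ \oo --> expR (-c) := @is_cvg_series_exp_coeff R (-c).
have [K0 _ HK0] := cvgr_gt _ cs 0 (expR_gt0 (-c)).
pose a j := (j`!%:R)^-1 * (P ^+ j) i k.
have a0 j : 0 <= a j by apply: mulr_ge0; [rewrite invr_ge0|apply: mx_pow_ge0].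
have eA M : psum (P + (-c)%:M) M i k = \sum_(j < M) s (M - j)%N * a j.
  by rewrite psum_split summxE; apply: eq_bigr => j _; rewrite !mxE.
have eP M : psum P M i k = \sum_(j < M) a j.
  by rewrite /psum summxE; apply: eq_bigr => j _; rewrite !mxE.
have key N : 0 <= psum (P + (-c)%:M) (N + K0) i k +
    expR c * (psum P (N + K0) i k - psum P N i k).
  rewrite eA !eP big_split_ord /= [X in X - _]big_split_ord /= [_ + _ - _]addrAC subrr add0r.
  rewrite mulr_sumr -addrA -big_split /=.
  apply: addr_ge0.
    apply: sumr_ge0 => j _; apply: mulr_ge0 => //; apply: ltW.
    apply: (HK0 (N + K0 - j)%N); rewrite /=; have := ltn_ord j; lia.
  apply: sumr_ge0 => d _; rewrite -mulrDl; apply: mulr_ge0 => //.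
  rewrite -lerBlDr sub0r lerNl; apply: le_trans _ (s_bound _ c0).
  by rewrite -normrN; apply: ler_norm.
apply: (@cvg_ge0 _ (fun N => psum (P + (-c)%:M) (N + K0) i k +
    expR c * (psum P (N + K0) i k - psum P N i k))) => //.
rewrite -[X in _ --> X]addr0 -(mulr0 (expR c)) -(subrr (expmx P i k)).
have h1 := @expmx_cvg R n (P + (-c)%:M) i k; rewrite -(cvg_shiftn K0) in h1.
have h2 := @expmx_cvg R n P i k; have h3 := h2; rewrite -(cvg_shiftn K0) in h2.
apply: cvgD; first exact: h1.
apply: cvgMl_tmp; apply: cvgB; [exact: h2| exact: h3].
Qed.

Lemma expmx_ge0 (R : realType) n (A : 'M[R]_n) :
  (forall i j, i != j -> 0 <= A i j) -> forall i k, 0 <= expmx A i k.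
Proof.
move=> HA i k.
pose c := \sum_l `|A l l|.
have c0 : 0 <= c by apply: sumr_ge0.
have -> : A = (A + c%:M) + (-c)%:M.
  apply/matrixP => p q; rewrite !mxE; case: (p == q).
    by rewrite !mulr1n addrK.
  by rewrite !mulr0n !addr0.
apply: expmx_ge0_aux => // p q; rewrite !mxE.
case: (eqVneq p q) => [->|pq].
  rewrite mulr1n.
  have h : `|A q q| <= c by rewrite /c (bigD1 q) //= lerDl sumr_ge0.
  have h2 := ler_norm (- A q q); rewrite normrN in h2.
  lra.
rewrite mulr0n addr0; exact: HA.
Qed.

Lemma scale_exp (R : realType) n (t : R) (Q : 'M[R]_n) k :
  (t *: Q) ^+ k = t ^+ k *: Q ^+ k.
Proof.
elim: k => [|k IH]; first by rewrite !expr0 scale1r.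
by rewrite !exprS IH -!mulmxE -scalemxAl -scalemxAr scalerA.
Qed.

Lemma cvg_abs_bound (R : realType) (u : nat -> R) l c K :
  u @ \oo --> l -> (forall N, `|u N - c| <= K) -> `|l - c| <= K.
Proof.
move=> cu H; rewrite -subr_ge0.
apply: (@cvg_ge0 _ (fun N => K - `|u N - c|)); first by move=> N; rewrite subr_ge0.
apply: cvgB; first exact: cvg_cst.
apply: cvg_norm; apply: cvgB => //; exact: cvg_cst.
Qed.

Lemma exp_taylor2 (R : realType) n (Q : 'M[R]_n) (t : R) i j : 0 < t -> t <= 1 ->
  `| expmx (t *: Q) i j - (1%:M i j + t * Q i j + t ^+ 2 / 2 * (Q *m Q) i j) |
    <= t ^+ 3 * expR (n%:R * mnorm Q).
Proof.
move=> t0 t1.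
have x0 : 0 <= n%:R * mnorm Q by apply: mulr_ge0 => //; apply: mnorm_ge0.
have := @expmx_cvg R n (t *: Q) i j; rewrite -(cvg_shiftn 3) => cu.
apply: (cvg_abs_bound cu) => N /=.
rewrite addnC /psum big_split_ord /= !big_ord_recr big_ord0 /= add0r.
set QQ := Q *m Q.
have e0 : 0`!%:R^-1 *: (t *: Q) ^+ 0 + 1`!%:R^-1 *: (t *: Q) ^+ 1 +
     2`!%:R^-1 *: (t *: Q) ^+ 2 = 1%:M + t *: Q + (t ^+ 2 / 2) *: QQ.
  rewrite !scale_exp expr0 !expr1 [Q ^+ 2]expr2 -mulmxE -/QQ.
  rewrite (_ : 0`! = 1)%N // (_ : 1`! = 1)%N // (_ : 2`! = 2)%N //.
  by rewrite invr1 !scale1r scalerA mulrC.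
rewrite e0 !mxE summxE -!/(QQ i j) [X in `|X - _|]addrC addrK.
apply: le_trans (ler_norm_sum _ _ _) _.
apply: (@le_trans _ _ (\sum_(l < N) t ^+ 3 *
    (((3 + l)%N`!%:R)^-1 * (n%:R * mnorm Q) ^+ (3 + l)%N))).
  apply: ler_sum => l _; rewrite scale_exp.
  move: (pow_bound Q (3 + l)%N i j); set Qk := (Q ^+ (3 + l)%N) => h1; clearbody Qk.
  rewrite !mxE normrM normrM normrX.
  rewrite ger0_norm ?invr_ge0 // (ger0_norm (ltW t0)).
  have h2 : t ^+ (3 + l) <= t ^+ 3.
    rewrite exprD ler_piMr //; first by apply: exprn_ge0; apply: ltW.
    by apply: exprn_ile1 => //; apply: ltW.
  rewrite [X in _ <= X]mulrCA; apply: ler_wpM2l; first by rewrite invr_ge0.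
  by apply: ler_pM => //; apply: exprn_ge0; apply: ltW.
rewrite -mulr_sumr; apply: ler_wpM2l; first by apply: exprn_ge0; apply: ltW.
apply: le_trans (expc_le (3 + N)%N x0).
rewrite /series exp_coeffE /= big_mkord big_split_ord lerDr.
by apply: sumr_ge0 => k _; apply: mulr_ge0; [rewrite invr_ge0|apply: exprn_ge0].
Qed.

Lemma sq_limit (R : realType) n (Q : 'M[R]_n) i j :
  (fun m => ((harmonic m) ^- 2 *: (expmx (harmonic m *: Q) - 1%:M - harmonic m *: Q)) i j)
    @ \oo --> (2^-1 *: (Q *m Q)) i j.
Proof.
set K := expR (n%:R * mnorm Q).
set c := (2^-1 *: (Q *m Q)) i j.
apply: (@squeeze_cvgr _ _ _ _ (fun m => c - harmonic m * K) (fun m => c + harmonic m * K)).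
- apply: nearW => m; rewrite -ler_distl.
  set t := harmonic m.
  have t0 : 0 < t by apply: harmonic_gt0.
  have t1 : t <= 1.
    by rewrite /t /harmonic /= invf_le1 ?ltr0Sn // ler1n.
  have ew : (t ^- 2 *: (expmx (t *: Q) - 1%:M - t *: Q)) i j =
    t ^- 2 * (expmx (t *: Q) i j - 1%:M i j - t * Q i j) by rewrite !mxE.
  have ec : c = 2^-1 * (Q *m Q) i j by rewrite /c mxE.
  rewrite ew ec; move: (exp_taylor2 Q i j t0 t1).
  set E := expmx _ i j; set o := 1%:M i j; set q := Q i j; set qq := (Q *m Q) i j.
  have tn0 : t != 0 by rewrite gt_eqF.
  have -> : t ^- 2 * (E - o - t * q) - 2^-1 * qq =
     t ^- 2 * (E - (o + t * q + t ^+ 2 / 2 * qq)) by field.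
  have tp : 0 <= t ^- 2 by rewrite invr_ge0 exprn_ge0 // ltW.
  rewrite normrM (ger0_norm tp) => h.
  have -> : t * K = t ^- 2 * (t ^+ 3 * K) by field.
  exact: ler_wpM2l.
- rewrite -[X in _ --> X]subr0 -(mul0r K); apply: cvgB; first exact: cvg_cst.
  exact: cvgMr_tmp cvg_harmonic.
- rewrite -[X in _ --> X]addr0 -(mul0r K); apply: cvgD; first exact: cvg_cst.
  exact: cvgMr_tmp cvg_harmonic.
Qed.

Lemma psumS (R : realType) n (A : 'M[R]_n) m :
  psum A m.+1 - 1%:M = \sum_(l < m) ((l.+1)`!%:R)^-1 *: A ^+ l.+1.
Proof.
rewrite /psum big_ord_recl /= expr0 invr1 scale1r [1 + _]addrC addrK.
by apply: eq_bigr => l _.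
Qed.

Lemma exp_in_sub (R : realType) n (V : set 'M[R]_n) (A : 'M[R]_n) :
  is_subspace V -> (forall k, V (A ^+ k.+1)) -> V (expmx A - 1%:M).
Proof.
move=> hV HA; apply: (@span_closed _ _ _ (fun m => psum A m.+1 - 1%:M)) => //.
- move=> m; rewrite psumS; apply: subsp_sum => // l.
  by case: hV => _ [_ VZ]; apply: VZ.
- move=> i j; rewrite mxE.
  have := @expmx_cvg R n A i j; rewrite -(cvg_shiftn 1) => H.
  have -> : (fun m => (psum A m.+1 - 1%:M) i j) =
      (fun m => psum A (m + 1) i j + (- 1%:M) i j).
    by apply/funext => m; rewrite addn1 mxE.
  by apply: cvgD => //; exact: cvg_cst.
Qed.

Lemma zrs_subspace (R : realType) n : is_subspace (@zero_row_sum R n).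
Proof.
split; first by rewrite /zero_row_sum /= mul0mx.
split.
  by move=> A B; rewrite /zero_row_sum /= => HA HB; rewrite mulmxDl HA HB addr0.
by move=> c A; rewrite /zero_row_sum /= => HA; rewrite -scalemxAl HA scaler0.
Qed.

Lemma pow_zrs (R : realType) n (A : 'M[R]_n) :
  A *m ones R n = 0 -> forall k, (A ^+ k.+1) *m ones R n = 0.
Proof.
move=> HA; elim => [|k IH]; first by rewrite expr1.
by rewrite exprSr -mulmxE -mulmxA HA mulmx0.
Qed.

Lemma jsub (R : realType) n (V : set 'M[R]_n) (Y : 'M[R]_n) :
  is_subspace V -> is_subspace [set X | V (X *m Y + Y *m X)].
Proof.
move=> hV; have hV' := hV; case: hV' => V0 [VD VZ]; split.
  by rewrite /= mul0mx mulmx0 addr0.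
split.
  move=> X1 X2 /= h1 h2; rewrite mulmxDl mulmxDr addrACA; exact: VD.
by move=> c X /= h; rewrite -scalemxAl -scalemxAr -scalerDr; exact: VZ.
Qed.

Theorem mainTheorem1 (R : realType) (n : nat) (L M : set 'M[R]_n) :
  (0 < n)%N ->
  is_subspace L -> L `<=` @zero_row_sum R n ->
  M = L `&` @rate_matrices R n ->
  M = mspan M `&` @rate_matrices R n /\
  (unif_stable M <-> jordan_closed (mspan M)).
Proof.
move=> hn hL hLZ hM.
have hV : is_subspace (mspan M) := mspan_subspace M.
have [V0 [VD VZ]] := hV.
have ML : M `<=` L by rewrite hM => x [].
have VL : mspan M `<=` L := mspan_sub hL ML.
have MV : M `<=` mspan M := fun x => @mspan_in R n M x.
have Mchar : forall x, M x <-> L x /\ rate_matrices x by move=> x; rewrite hM.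
split.
  apply/seteqP; split => x.
    by move=> Mx; split; [exact: MV | by case/Mchar: Mx].
  by move=> [Vx rx]; apply/Mchar; split => //; exact: VL.
split.
- move=> US.
  have sq : forall Q, M Q -> mspan M (Q *m Q).
    move=> Q MQ.
    have h2 : mspan M (2^-1 *: (Q *m Q)).
      apply: (@span_closed _ _ _ (fun m => (harmonic m) ^- 2 *:
          (expmx (harmonic m *: Q) - 1%:M - harmonic m *: Q))) => //;
        last by move=> i j; exact: sq_limit.
      move=> m; apply: (VZ).
      have [Qh [MQh ->]] := US Q MQ (harmonic m) (ltW (harmonic_gt0 m)).
      apply: (subsp_sub hV); [exact: MV | apply: (VZ); exact: MV].
    have -> : Q *m Q = 2 *: (2^-1 *: (Q *m Q)).
      by rewrite scalerA mulfV ?scale1r // pnatr_eq0.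
    by apply: (VZ).
  have Madd : forall X Y, M X -> M Y -> M (X + Y).
    move=> X Y /Mchar [LX [rX oX]] /Mchar [LY [rY oY]]; apply/Mchar; split.
      by case: hL => _ [LD _]; apply: LD.
    split; first by rewrite mulmxDl rX rY addr0.
    by move=> i j ij; rewrite mxE; apply: addr_ge0; [apply: oX|apply: oY].
  have hJ : forall X Y, M X -> M Y -> mspan M (X *m Y + Y *m X).
    move=> X Y MX MY.
    have e : (X + Y) *m (X + Y) = (X *m Y + Y *m X) + Y *m Y + X *m X.
      by rewrite mulmxDl !mulmxDr [RHS]addrC !addrA.
    have := subsp_sub hV (subsp_sub hV (sq _ (Madd _ _ MX MY)) (sq _ MX)) (sq _ MY).
    by rewrite e !addrK.
  move=> A B VA VB.
  have step1 : forall X, M X -> mspan M (A *m X + X *m A).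
    move=> X MX.
    have : mspan M `<=` [set Z | mspan M (Z *m X + X *m Z)].
      apply: mspan_sub; first exact: jsub.
      by move=> Z MZ /=; apply: hJ.
    by move/(_ A VA).
  have : mspan M `<=` [set Z | mspan M (Z *m A + A *m Z)].
    apply: mspan_sub; first exact: jsub.
    by move=> Z MZ /=; rewrite addrC; apply: step1.
  by move/(_ B VB) => /=; rewrite addrC.
- move=> JC Q MQ t t0.
  have [LQ [rQ oQ]] := (Mchar Q).1 MQ.
  pose A := t *: Q.
  have MA : M A.
    apply/Mchar; split; first by case: hL => _ [_ LZ]; apply: LZ.
    split; first by rewrite -scalemxAl rQ scaler0.
    by move=> i j ij; rewrite mxE; apply: mulr_ge0 => //; apply: oQ.
  have [LA [rA oA]] := (Mchar A).1 MA.
  have pw : forall k, mspan M (A ^+ k.+1).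
    elim => [|k IH]; first by rewrite expr1; exact: MV.
    have -> : A ^+ k.+2 = 2^-1 *: (A *m A ^+ k.+1 + A ^+ k.+1 *m A).
      rewrite mulmxE -exprS -exprSr -mulr2n -[A ^+ k.+2 *+ 2]scaler_nat scalerA mulVf ?scale1r //.
    by apply: (VZ); apply: (JC) => //; exact: MV.
  exists (expmx A - 1%:M); split => //.
  apply/Mchar; split; first by apply: (VL); exact: exp_in_sub.
  split.
    have := @exp_in_sub R n _ A (zrs_subspace R n) (pow_zrs rA).
    by [].
  move=> i j ij; move: (@expmx_ge0 R n A oA i j); move: (expmx A) => E h.
  by rewrite !mxE (negbTE ij) mulr0n subr0.
Qed.
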